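(* Let $1<p\le n$. Let $\mathbf{X}$ be a deterministic $n\times p$ matrix with $\mathbf{X}^T\mathbf{X}=\mathbf{I}_p$, let $\boldsymbol\beta_0=(\beta_1,0,\dots,0)^T\in\mathbb{R}^p$ with $\beta_1\neq 0$, let $\sigma>0$, and let $\mathbf{y}=\mathbf{X}\boldsymbol\beta_0+\boldsymbol\varepsilon$ with $\varepsilon_1,\dots,\varepsilon_n$ i.i.d. $N(0,\sigma^2)$. Set $\mathbf z=\mathbf{X}^T\mathbf{y}$. For $\lambda\ge 0$ define $$L_p(\lambda)=\frac1n\Big(\beta_1-\operatorname{sgn}(z_1)(|z_1|-\lambda)_+\Big)^2+\frac1n\sum_{j=2}^p\big((|z_j|-\lambda)_+\big)^2,\qquad L_1(\lambda)=\frac1n\Big(\beta_1-\operatorname{sgn}(z_1)(|z_1|-\lambda)_+\Big)^2,$$ and $L_p(\lambda_p^* )=\min_{\lambda\ge0}L_p(\lambda)$, $L_1(\lambda_1^* )=\min_{\lambda\ge 0}L_1(\lambda)$. Then $$\mathbb E\left(\frac{L_p(\lambda_p^* )}{L_1(\lambda_1^* )}\right)=\infty.$$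
   Context: $(a)_+=\max(a,0)$; $\operatorname{sgn}$ is the sign function. The ratio is a nonnegative extended-real random variable with the convention $a/0=+\infty$ for $a>0$ (the value assigned to $0/0$ is any fixed number in $[0,\infty)$, e.g. $1$; it does not affect the conclusion). $L_p(\lambda)$ is the $L_2$ loss of the Lasso estimate $\hat\beta_{\lambda j}=\operatorname{sgn}(z_j)(|z_j|-\lambda)_+$ with all $p$ predictors and $L_1(\lambda)$ the loss using only the first (true) predictor. *)

(* Defs.v *)
From HB Require Import structures.
From mathcomp Require Import all_boot all_order all_algebra.
From mathcomp Require Import all_classical all_reals all_analysis.
Set Implicit Arguments. Unset Strict Implicit. Unset Printing Implicit Defensive.
Import Order.TTheory GRing.Theory Num.Theory.
Local Open Scope classical_set_scope.
Local Open Scope ring_scope.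

Definition pos_part {R : realType} (a : R) : R := Num.max a 0.

Definition soft {R : realType} (z lam : R) : R := Num.sg z * pos_part (`|z| - lam).

Definition mutually_independent {R : realType} d (T : measurableType d)
  (P : probability T R) (n : nat) (e : 'I_n -> {RV P >-> R}) : Prop :=
  forall B : 'I_n -> set R, (forall i, measurable (B i)) ->
    P (\bigcap_(i in [set: 'I_n]) (e i @^-1` B i)) =
    (\prod_(i < n) P (e i @^-1` B i))%E.

(* z = X^T y with y = X beta0 + eps, evaluated at outcome w *)
Definition zvec {R : realType} d (T : measurableType d) (P : probability T R)
  (n p : nat) (X : 'M[R]_(n, p)) (beta0 : 'I_p -> R)
  (e : 'I_n -> {RV P >-> R}) (w : T) (j : 'I_p) : R :=
  \sum_(i < n) X i j * ((\sum_(k < p) X i k * beta0 k) + e i w).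

Definition L1fun {R : realType} (n : nat) (beta1 z1 lam : R) : R :=
  n%:R^-1 * (beta1 - soft z1 lam) ^+ 2.

(* L_p(lambda) = L_1(lambda) + (1/n) sum_{j=2}^p ((|z_j|-lambda)_+)^2 ;
   j0 is the first index (j = 1 in the paper). *)
Definition Lpfun {R : realType} (n p : nat) (j0 : 'I_p) (beta1 : R)
  (z : 'I_p -> R) (lam : R) : R :=
  L1fun n beta1 (z j0) lam +
  n%:R^-1 * \sum_(j < p | j != j0) (pos_part (`|z j| - lam)) ^+ 2.

(* minimal value over lambda >= 0 (the minimum is attained; we take the inf) *)
Definition minval {R : realType} (L : R -> R) : R :=
  inf [set L lam | lam in [set lam : R | 0 <= lam]].

Definition eratio {R : realType} (a b : R) : \bar R :=
  if b == 0 then (if a == 0 then 1%E else +oo%E) else (a / b)%:E.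

(* Main.v *)
Require Import Defs.
From HB Require Import structures.
From mathcomp Require Import all_boot all_order all_algebra.
From mathcomp Require Import all_classical all_reals all_analysis.
From mathcomp Require Import ring lra measurable_realfun.
Import Order.TTheory GRing.Theory Num.Theory.
Local Open Scope classical_set_scope.
Local Open Scope ring_scope.
Set Implicit Arguments. Unset Strict Implicit. Unset Printing Implicit Defensive.
Section S.
Variable R : realType.
Lemma lp_lb (b z0 y lam : R) : b != 0 -> `|z0| <= `|b| + 3/4 -> 15/4 <= `|y| ->
  0 <= lam ->
  (Num.min 1 `|b|)^+2 <= (b - soft z0 lam)^+2 + (pos_part (`|y| - lam))^+2.
Proof.
move=> b0 hz hy hl.
set m := Num.min 1 `|b|.
have m0 : 0 < m by rewrite /m lt_min ltr01 normr_gt0.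
have m1 : m <= 1 by rewrite /m ge_min lexx.
have mb : m <= `|b| by rewrite /m ge_min lexx orbT.
clearbody m.
rewrite /soft /pos_part.
have [l2|l2] := leP lam 2.
  have h1 : 1 <= Num.max (`|y| - lam) 0 by rewrite le_max; apply/orP; left; lra.
  have h2 : m ^+ 2 <= 1 by rewrite expr2; nra.
  have h3 : 1 <= Num.max (`|y| - lam) 0 ^+ 2 by rewrite expr2; nra.
  have h4 : 0 <= (b - Num.sg z0 * Num.max (`|z0| - lam) 0) ^+ 2 by exact: sqr_ge0.
  lra. 
set q := Num.max (`|z0| - lam) 0.
have q0 : 0 <= q by rewrite /q le_max lexx orbT.
have hq : `|b| - q >= m.
  rewrite /q; have [h|h] := leP (`|z0| - lam) 0.
    by rewrite subr0.
  lra. 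
have hs : `|Num.sg z0 * q| <= q.
  rewrite normrM (ger0_norm q0) normr_sg; case: (z0 != 0); rewrite ?mul1r ?mul0r //.
have ht : `|b| - `|Num.sg z0 * q| <= `|b - Num.sg z0 * q| by exact: lerB_dist.
have hm : m <= `|b - Num.sg z0 * q| by lra.
have h5 : m ^+ 2 <= (b - Num.sg z0 * q) ^+ 2.
  have : m ^+ 2 <= `|b - Num.sg z0 * q| ^+ 2 by rewrite !expr2; nra.
  by rewrite real_normK ?num_real.
have h6 : 0 <= Num.max (`|y| - lam) 0 ^+ 2 by exact: sqr_ge0.
lra.
Qed.
End S.
Section S.
Variable R : realType.
Lemma soft_exact (b w : R) : 0 < b * w -> b - soft (b + w) `|w| = 0.
Proof.
rewrite /soft /pos_part.
have [b0|b0|->] := ltgtP b 0; last by rewrite mul0r ltxx.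
- rewrite nmulr_rgt0 // => w0.
  have bw : b + w < 0 by lra.
  rewrite (ltr0_norm bw) (ltr0_norm w0) (ltr0_sg bw).
  rewrite max_l; lra.
- rewrite pmulr_rgt0 // => w0.
  have bw : 0 < b + w by lra.
  rewrite (gtr0_norm bw) (gtr0_norm w0) (gtr0_sg bw).
  rewrite max_l; lra.
Qed.
End S.
Section S.
Variable R : realType.
Lemma normal_itv_gt0 (sigma a b : R) : 0 < sigma -> a < b ->
  (0 < normal_prob 0 sigma [set` `]a, b[])%E.
Proof.
move=> s0 ab.
rewrite /normal_prob.
pose M := `|a| + `|b|.
pose c := normal_peak sigma * expR (- M ^+ 2 / (sigma ^+ 2 *+ 2)).
have c0 : 0 < c by rewrite mulr_gt0 ?expR_gt0 ?normal_peak_gt0 ?gt_eqF.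
apply: (@lt_le_trans _ _ (\int[lebesgue_measure]_(x in [set` `]a, b[]) (cst c%:E) x)%E).
  rewrite integral_cst //= lebesgue_measure_itv /= lte_fin ab -EFinB -EFinM lte_fin.
  by rewrite mulr_gt0 // subr_gt0.
apply: ge0_le_integral => //=.
- by move=> x _; rewrite lee_fin ltW.
- apply/measurable_EFinP; apply: measurable_funTS; exact: measurable_normal_pdf.
- move=> x; rewrite in_itv /= => /andP[ax xb].
  rewrite lee_fin normal_pdfE ?gt_eqF //= /c ler_wpM2l ?normal_peak_ge0 //.
  rewrite /normal_fun ler_expR subr0 !mulNr lerN2 ler_pM2r ?invr_gt0 ?mulrn_wgt0 ?exprn_gt0 //.
  have hM : -M <= x <= M.
    rewrite /M; have := ler_norm a; have := ler_norm b; have := ler_normr a; 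
    have := ler_norm (-a); have := ler_norm (-b); rewrite !normrN => *; apply/andP; split; lra.
  case/andP: hM => h1 h2; have M0 : 0 <= M by rewrite /M addr_ge0.
  rewrite !expr2; nra.
Qed.
End S.
Section S.
Variables (R : realType) (d : measure_display) (T : measurableType d) (P : probability T R).
Local Open Scope ereal_scope.
Lemma int_mono_nm (f g : T -> \bar R) : (forall x, 0 <= g x) -> (forall x, g x <= f x) ->
  \int[P]_x g x <= \int[P]_x f x.
Proof.
move=> g0 gf.
rewrite !ge0_integralTE //; last by move=> x; exact: le_trans (g0 x) (gf x).
apply: ereal_sup_le => _ [h hg <-]; exists h => //= x; exact: le_trans (hg x) (gf x).
Qed.

Lemma int_pinfty (f : T -> \bar R) (E : set T) : measurable E -> 0 < P E ->
  (forall x, 0 <= f x) -> (forall x, E x -> f x = +oo) -> \int[P]_x f x = +oo.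
Proof.
move=> mE PE f0 fE.
have PEf : P E \is a fin_num by rewrite ge0_fin_numE ?measure_ge0 // (le_lt_trans (probability_le1 _ mE)) ?ltey.
pose pe := fine (P E).
have pe0 : (0 < pe)%R by rewrite /pe -lte_fin fineK.
have key : forall c : R, (0 <= c)%R -> (c * pe)%:E <= \int[P]_x f x.
  move=> c c0.
  have -> : (c * pe)%:E = \int[P]_(x in E) (cst c%:E) x.
    by rewrite integral_cst // /pe EFinM fineK.
  rewrite integral_mkcond; apply: int_mono_nm.
    by move=> x; rewrite /patch; case: ifP => // _; rewrite lee_fin.
  move=> x; rewrite /patch; case: ifP => // /[1!inE] /fE -> ; exact: leey.
have := @integral_ge0 _ _ _ P setT f (fun x _ => f0 x).
case Hi : (\int[P]_x f x) => [r| |] // r0.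
have := key ((r + 1) / pe)%R; rewrite Hi lee_fin -mulrA mulVf ?gt_eqF // mulr1.
move=> /(_ _); rewrite lee_fin in r0.
have h : (0 <= (r + 1) / pe)%R by apply: divr_ge0; [apply: addr_ge0 | apply: ltW].
by move/(_ h) => H; exfalso; clear -H; lra.
Qed.
End S.
Section M.
Variable R : realType.

Lemma prod_gt0 n (F : 'I_n -> \bar R) : (forall i, (0 < F i)%E) -> (0 < \prod_(i < n) F i)%E.
Proof.
move=> h; elim/big_ind: _ => //.
all: try (by move=> x y; exact: mule_gt0).
Qed.

Lemma XtX_sum n p (X : 'M[R]_(n, p)) (hX : X^T *m X = 1%:M) (v : 'I_p -> R) j :
  \sum_(i < n) X i j * (\sum_(k < p) X i k * v k) = v j.
Proof.
transitivity (\sum_(k < p) (X^T *m X) j k * v k).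
  under eq_bigr do rewrite big_distrr /=.
  rewrite exchange_big /=; apply: eq_bigr => k _.
  by rewrite !mxE big_distrl /=; apply: eq_bigr => i _; rewrite !mxE mulrA.
rewrite hX (bigD1 j) //= big1 ?addr0; first by rewrite mxE eqxx mulr1n mul1r.
by move=> k kj; rewrite mxE eq_sym (negbTE kj) mulr0n mul0r.
Qed.

Lemma minval_lb (L : R -> R) m : (forall l, 0 <= l -> m <= L l) -> m <= minval L.
Proof.
move=> h; apply: lb_le_inf; first by exists (L 0); exists 0; rewrite /= ?lexx.
by move=> _ [l l0 <-]; exact: h.
Qed.

Lemma minval_le (L : R -> R) l : (forall l, 0 <= l -> 0 <= L l) -> 0 <= l ->
  minval L <= L l.
Proof.
move=> h l0.
have hb : has_lbound [set L x | x in [set x : R | 0 <= x]].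
  by exists 0 => _ [x x0 <-]; exact: h.
by apply: (ge_inf hb); exists l.
Qed.

Lemma L1_ge0 n b z l : 0 <= L1fun n b z l :> R.
Proof. by rewrite /L1fun mulr_ge0 ?invr_ge0 ?ler0n ?sqr_ge0. Qed.

Lemma Lp_ge0 n p j0 b (z : 'I_p -> R) l : 0 <= Lpfun n j0 b z l.
Proof.
rewrite /Lpfun addr_ge0 ?L1_ge0 // mulr_ge0 ?invr_ge0 ?ler0n //.
by apply: sumr_ge0 => j _; exact: sqr_ge0.
Qed.

Lemma eratio_ge0 (a b : R) : 0 <= a -> 0 <= b -> (0 <= eratio a b)%E.
Proof.
move=> a0 b0; rewrite /eratio; case: eqP => _; first by case: eqP => _; rewrite ?lee01 ?leey.
by rewrite lee_fin divr_ge0.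
Qed.
End M.
Unset Implicit Arguments. Set Strict Implicit.
Theorem proposition2p5 (R : realType) (d : measure_display) (T : measurableType d)
  (P : probability T R) (n p : nat) (hp : (1 < p)%N) (hpn : (p <= n)%N)
  (X : 'M[R]_(n, p)) (hX : X^T *m X = 1%:M)
  (beta1 : R) (hb : beta1 != 0) (sigma : R) (hs : 0 < sigma)
  (eps : 'I_n -> {RV P >-> R})
  (hind : mutually_independent eps)
  (hnorm : forall i B, measurable B ->
     distribution P (eps i) B = normal_prob 0 sigma B) :
  let j0 : 'I_p := Ordinal (ltnW hp) in
  let beta0 : 'I_p -> R := fun j => if j == j0 then beta1 else 0 in
  let z := zvec X beta0 eps in
  (\int[P]_w eratio (minval (Lpfun n j0 beta1 (z w)))
                    (minval (L1fun n beta1 (z w j0))))%E = +oo%E.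
Proof.
move=> j0 beta0 z.
pose j1 : 'I_p := Ordinal hp.
have j10 : j1 != j0 by [].
pose s := Num.sg beta1.
have hs1 : s = 1 \/ s = -1.
  rewrite /s; case: (ltgtP beta1 0) => [bn|bp|b0].
  - by right; rewrite ltr0_sg.
  - by left; rewrite gtr0_sg.
  - by rewrite b0 eqxx in hb.
pose u : 'I_p -> R := fun j => if j == j0 then s / 2 else if j == j1 then 4 else 0.
pose cc : 'I_n -> R := fun i => \sum_(k < p) X i k * u k.
pose S0 := \sum_(i < n) `|X i j0|.
pose S1 := \sum_(i < n) `|X i j1|.
have S00 : 0 <= S0 by apply: sumr_ge0 => i _; exact: normr_ge0.
have S10 : 0 <= S1 by apply: sumr_ge0 => i _; exact: normr_ge0.
pose del := (4 * (1 + S0 + S1))^-1.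
have K0 : 0 < 1 + S0 + S1 by lra.
have del0 : 0 < del by rewrite invr_gt0 mulr_gt0 //.
pose B : 'I_n -> set R := fun i => [set` `]cc i - del, cc i + del[].
have mB : forall i, measurable (B i) by move=> i; exact: measurable_itv.
pose E := \bigcap_(i in [set: 'I_n]) (eps i @^-1` B i).
have mE : measurable E.
  apply: fin_bigcap_measurable; first exact: finite_finset.
  by move=> i _; exact: measurable_funPTI.
have PE : (0 < P E)%E.
  rewrite /E hind //; apply: prod_gt0 => i.
  have := hnorm i (B i) (mB i); rewrite /distribution /pushforward /= => ->.
  by apply: normal_itv_gt0 => //; lra.
pose W w j := \sum_(i < n) X i j * eps i w.
have hz : forall w j, z w j = beta0 j + W w j.
  move=> w j; rewrite /z /zvec /W -(XtX_sum hX beta0 j) -big_split /=.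
  by apply: eq_bigr => i _; rewrite mulrDr.
have hdev : forall w, E w -> forall j,
    `|W w j - u j| <= (\sum_(i < n) `|X i j|) * del.
  move=> w Ew j.
  have -> : W w j - u j = \sum_(i < n) X i j * (eps i w - cc i).
    by rewrite /W -(XtX_sum hX u j) -sumrB; apply: eq_bigr => i _; rewrite mulrBr.
  rewrite mulr_suml; apply: le_trans (ler_norm_sum _ _ _) _.
  apply: ler_sum => i _; rewrite normrM ler_wpM2l //.
  have := Ew i Logic.I; rewrite /B /= in_itv /= => /andP[h1 h2].
  rewrite ler_norml; apply/andP; split; lra.
have k0 : S0 * del <= 1/4.
  rewrite /del ler_pdivrMr ?mulr_gt0 //; lra.
have k1 : S1 * del <= 1/4.
  rewrite /del ler_pdivrMr ?mulr_gt0 //; lra.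
have hf : forall w, E w -> eratio (minval (Lpfun n j0 beta1 (z w)))
                    (minval (L1fun n beta1 (z w j0))) = +oo%E.
  move=> w Ew.
  have d0 := hdev w Ew j0; have d1 := hdev w Ew j1.
  have u0 : u j0 = s / 2 by rewrite /u eqxx.
  have u1 : u j1 = 4 by rewrite /u (negbTE j10) eqxx.
  have z0e : z w j0 = beta1 + W w j0 by rewrite hz /beta0 eqxx.
  have z1e : z w j1 = W w j1 by rewrite hz /beta0 (negbTE j10) add0r.
  have e0 : `|W w j0 - s / 2| <= 1/4 by rewrite -u0; exact: le_trans d0 k0.
  have e1 : `|W w j1 - 4| <= 1/4 by rewrite -u1; exact: le_trans d1 k1.
  move: e0 e1; rewrite !ler_norml => /andP[e0a e0b] /andP[e1a e1b].
  have hW0 : `|W w j0| <= 3/4.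
    by rewrite ler_norml; case: hs1 e0a e0b => -> ? ?; apply/andP; split; lra.
  have bw : 0 < beta1 * W w j0.
    case: (ltgtP beta1 0) => [bn|bp|b0]; last by rewrite b0 eqxx in hb.
    - have : s = -1 by rewrite /s ltr0_sg.
      by move=> hs'; rewrite hs' in e0a e0b; rewrite nmulr_rgt0 //; lra.
    - have : s = 1 by rewrite /s gtr0_sg.
      by move=> hs'; rewrite hs' in e0a e0b; rewrite pmulr_rgt0 //; lra.
  have hzb : `|z w j0| <= `|beta1| + 3/4.
    rewrite z0e; apply: le_trans (ler_normD _ _) _; lra.
  have hy : 15/4 <= `|z w j1|.
    rewrite z1e ger0_norm; lra.
  pose mm := Num.min 1 `|beta1|.
  have mm0 : 0 < mm by rewrite /mm lt_min ltr01 normr_gt0.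
  have Lplb : n%:R^-1 * mm ^+ 2 <= minval (Lpfun n j0 beta1 (z w)).
    apply: minval_lb => l l0.
    have h := lp_lb hb hzb hy l0.
    rewrite /Lpfun /L1fun (bigD1 j1) //= -mulrDr ler_wpM2l ?invr_ge0 ?ler0n //.
    have : 0 <= \sum_(i < p | (i != j0) && (i != j1)) pos_part (`|z w i| - l) ^+ 2.
      by apply: sumr_ge0 => i _; exact: sqr_ge0.
    rewrite /mm in h *; lra.
  have L1z : minval (L1fun n beta1 (z w j0)) = 0.
    apply/eqP; rewrite eq_le; apply/andP; split.
    - apply: le_trans (minval_le (fun l _ => L1_ge0 n beta1 (z w j0) l) (normr_ge0 (W w j0))) _.
      by rewrite /L1fun z0e soft_exact // expr2 mulr0 mulr0.
    - by apply: minval_lb => l _; exact: L1_ge0.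
  rewrite L1z /eratio eqxx gt_eqF //; apply: lt_le_trans Lplb.
  have n0 : (0 < n)%N by apply: leq_trans hpn; apply: ltnW.
  by rewrite mulr_gt0 ?invr_gt0 ?ltr0n // exprn_gt0.
apply: (int_pinfty mE PE) => //.
move=> w; apply: eratio_ge0; apply: minval_lb => l l0; [exact: Lp_ge0 | exact: L1_ge0].
Qed.
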